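(* Let $\Sigma$ be a simply connected non-planar minimal surface in $\mathbb{R}^3$, parametrized (up to translations) by the conformal harmonic immersion \[ \mathbf{X}(\zeta)=\Big(\mathrm{Re}\int\phi_1(\zeta)\,d\zeta,\ \mathrm{Re}\int\phi_2(\zeta)\,d\zeta,\ \mathrm{Re}\int\phi_3(\zeta)\,d\zeta\Big), \] where $\zeta$ is a conformal coordinate and the holomorphic null curve $\phi=(\phi_1,\phi_2,\phi_3)$ is given in terms of Weierstrass data $(G(\zeta),\Psi(\zeta)\,d\zeta)$ ($G$ meromorphic, $\Psi\,d\zeta$ a holomorphic one-form) by \[ \phi=\Big(\tfrac12(1-G^2)\Psi,\ \tfrac{i}{2}(1+G^2)\Psi,\ G\Psi\Big). \] Let $c\in\mathbb{C}$ be a constant and define the holomorphic curve $\widehat{\phi}=(\widehat{\phi}_0,\widehat{\phi}_1,\widehat{\phi}_2,\widehat{\phi}_3)$ by \[ \widehat{\phi}=\Big(c\,G^2\Psi,\ \tfrac12\big(1+(c^2-1)G^2\big)\Psi,\ \tfrac{i}{2}\big(1+(c^2+1)G^2\big)\Psi,\ G\Psi\Big). \] Then there exists a minimal surface $\Sigma^c$ in $\mathbb{R}^4$, parametrized (up to translations) by the conformal harmonic immersion \[ \mathbf{X}^c(\zeta)=\Big(\mathrm{Re}\int\widehat{\phi}_0\,d\zeta,\ \mathrm{Re}\int\widehat{\phi}_1\,d\zeta,\ \mathrm{Re}\int\widehat{\phi}_2\,d\zeta,\ \mathrm{Re}\int\widehat{\phi}_3\,d\zeta\Big). \] The metric induced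 on $\Sigma^c$ by $\mathbf{X}^c$ is \[ g_{\Sigma^c}=\frac14\Big(|\Psi|^2\,|1+c^2G^2|^2\Big(1+\frac{|G|^2}{|1+icG|^2}\Big)\Big(1+\frac{|G|^2}{|1-icG|^2}\Big)\Big)|d\zeta|^2 . \] Moreover $\widehat{\phi}_0+c\,\widehat{\phi}_1+ic\,\widehat{\phi}_2=0$, and consequently the minimal surface $\Sigma^c$ in $\mathbb{R}^4$ is degenerate.
   Context: For a conformal harmonic immersion $\mathbf{X}:\Sigma\to\mathbb{R}^4$ with local conformal coordinate $\zeta$, its Gauss map is $\mathcal{G}(\zeta)=[\partial\mathbf{X}/\partial\zeta]=[\phi_0:\phi_1:\phi_2:\phi_3]\in\mathbb{CP}^3$, where $(\phi_0,\ldots,\phi_3)=2\,d\mathbf{X}/d\zeta$; it takes values in the quadric $\{z_0^2+z_1^2+z_2^2+z_3^2=0\}\subset\mathbb{CP}^3$. The minimal surface is called degenerate if the image of its Gauss map lies in a hyperplane of $\mathbb{CP}^3$. A holomorphic curve $(\phi_k)$ is null if $\sum_k\phi_k^2=0$; the real parts of integrals of a holomorphic null curve give a conformal harmonic map, with induced metric $\frac12\sum_k|\phi_k|^2|d\zeta|^2$. *)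

(* Defs.v *)
From HB Require Import structures.
From mathcomp Require Import all_boot all_order all_algebra.
From mathcomp Require Import all_classical all_reals all_analysis.
From mathcomp Require Export complex.
Export Order.TTheory GRing.Theory Num.Theory.
Export numFieldNormedType.Exports.

Set Implicit Arguments.
Unset Strict Implicit.
Unset Printing Implicit Defensive.

Local Open Scope ring_scope.
Local Open Scope classical_set_scope.

(* The complex plane C = R[i], seen as a normed space over itself
   (so that [derivable f z 1] is complex differentiability). *)
Definition C (R : realType) := (R[i])^o.

Section Defs.
Variable R : realType.
Local Notation C := (C R).

Definition holomorphic_on (V : set C) (f : C -> C) : Prop :=
  forall z, V z -> derivable f z 1.

Definition primitive_on (V : set C) (F f : C -> C) : Prop :=
  forall z, V z -> is_derive z (1 : C) F (f z).

Definition loop_in (V : set C) (g : R -> C) : Prop :=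
  [/\ {within `[0, 1], continuous g}, g 0 = g 1 &
      forall s, `[0, 1] s -> V (g s)].

Definition null_homotopic_in (V : set C) (g : R -> C) : Prop :=
  exists H : R * R -> C,
    [/\ {within `[0, 1] `*` `[0, 1], continuous H},
        (forall s t, `[0, 1] s -> `[0, 1] t -> V (H (s, t))),
        (forall s, `[0, 1] s -> H (s, 0) = g s /\ H (s, 1) = g 0) &
        (forall t, `[0, 1] t -> H (0, t) = g 0 /\ H (1, t) = g 0)].

Definition simply_connected_domain (V : set C) : Prop :=
  [/\ open V, V !=set0, connected V &
      forall g, loop_in V g -> null_homotopic_in V g].

Definition meromorphic_on (V P : set C) (G : C -> C) : Prop :=
  [/\ P `<=` V,
      (forall z, V z -> \forall w \near z^', ~ P w),
      holomorphic_on (V `\` P) G &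
      (forall p, P p -> (fun w => (G w)^-1) @ p^' --> (0 : C))].

Definition nonplanar3 (V : set C) (Phi1 Phi2 Phi3 : C -> C) : Prop :=
  ~ exists a1 a2 a3 d : R,
      ~ (a1 = 0 /\ a2 = 0 /\ a3 = 0) /\
      forall z, V z ->
        a1 * complex.Re (Phi1 z) + a2 * complex.Re (Phi2 z) + a3 * complex.Re (Phi3 z) = d.

Definition induced_metric4 (ph0 ph1 ph2 ph3 : C -> C) (z : C) : C :=
  2^-1 * (`|ph0 z| ^+ 2 + `|ph1 z| ^+ 2 + `|ph2 z| ^+ 2 + `|ph3 z| ^+ 2).

(* The minimal surface Re \int (ph0,..,ph3) in R^4 is degenerate: the image
   of its Gauss map [ph0 : ph1 : ph2 : ph3] lies in a hyperplane of CP^3. *)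
Definition degenerate4 (V : set C) (ph0 ph1 ph2 ph3 : C -> C) : Prop :=
  exists a0 a1 a2 a3 : C,
    ~ (a0 = 0 /\ a1 = 0 /\ a2 = 0 /\ a3 = 0) /\
    forall z, V z -> a0 * ph0 z + a1 * ph1 z + a2 * ph2 z + a3 * ph3 z = 0.

End Defs.

(* Main.v *)
Require Import Defs.
From HB Require Import structures.
From mathcomp Require Import all_boot all_order all_algebra.
From mathcomp Require Import all_classical all_reals all_analysis ring.
From mathcomp Require Import complex.
Import Order.TTheory GRing.Theory Num.Theory.
Import numFieldNormedType.Exports.
Local Open Scope ring_scope.
Local Open Scope classical_set_scope.

Section H.
Variable R : realType.
Implicit Types (U : set (C R)) (f g : C R -> C R).

Lemma hol_comb U k1 k2 f g : holomorphic_on U f -> holomorphic_on U g ->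
  holomorphic_on U (fun z => k1 * f z + k2 * g z).
Proof.
move=> hf hg z Uz.
have -> : (fun z => k1 * f z + k2 * g z) = k1 \*: f + k2 \*: g by apply/funext.
exact: (derivableD (derivableZ (k:=k1) (hf z Uz)) (derivableZ (k:=k2) (hg z Uz))).
Qed.

Lemma prim_comb U k1 k2 F1 F2 f g : primitive_on U F1 f -> primitive_on U F2 g ->
  primitive_on U (fun z => k1 * F1 z + k2 * F2 z) (fun z => k1 * f z + k2 * g z).
Proof.
move=> hf hg z Uz.
have := is_deriveD (is_deriveZ k1 (hf z Uz)) (is_deriveZ k2 (hg z Uz)).
have -> : (fun z => k1 * F1 z + k2 * F2 z) = k1 \*: F1 + k2 \*: F2 by apply/funext.
by [].
Qed.

Lemma zero_ext U P f : open U -> (forall z, U z -> \forall w \near z^', ~ P w) ->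
  (forall z, U z -> {for z, continuous f}) ->
  (forall z, (U `\` P) z -> f z = 0) -> forall z, U z -> f z = 0.
Proof.
move=> oU Pd fc f0 z Uz.
have h1 : f @ z^' --> f z.
  apply: cvg_within_filter.  exact: fc.
have h2 : f @ z^' --> (0 : C R).
  apply: cvg_trans (cvg_cst (0 : C R)).
  apply: near_eq_cvg.
  have Un : \forall w \near z^', U w.
    apply: cvg_within. by apply: (@open_nbhs_nbhs _ _ U).
  near=> w. apply/esym/f0; split; [near: w; exact: Un | near: w; exact: Pd].
  all: try exact: Proper_dnbhs_regular_numFieldType.
  all: try by end_near.
exact: (cvg_unique _ h1 h2).
Unshelve. all: try by end_near. all: exact: Proper_dnbhs_regular_numFieldType.
Qed.
End H.

Section Alg.
Variable F : numFieldType.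
Variables (j c : F).
Hypothesis hJ : j ^+ 2 = -1.
Hypothesis h2 : 2^-1 * 2 = 1 :> F.
Local Notation a1 := (- c). Local Notation b1 := (- c * j).
Local Notation a2 := (2^-1 - 2^-1 * (c ^+ 2 - 1)). Local Notation b2 := (- (2^-1 * j) - 2^-1 * (c ^+ 2 - 1) * j).
Local Notation a3 := (j / 2 - j / 2 * (c ^+ 2 + 1)). Local Notation b3 := (- (j / 2 * j) - j / 2 * (c ^+ 2 + 1) * j).

Lemma F1 (g p : F) : a1 * (2^-1 * (1 - g ^+ 2) * p) + b1 * (j / 2 * (1 + g ^+ 2) * p) = c * g ^+ 2 * p.
Proof. field: hJ; rewrite ?pnatr_eq0 //. Qed.
Lemma F2 (g p : F) : a2 * (2^-1 * (1 - g ^+ 2) * p) + b2 * (j / 2 * (1 + g ^+ 2) * p) =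
        2^-1 * (1 + (c ^+ 2 - 1) * g ^+ 2) * p.
Proof. field: hJ; rewrite ?pnatr_eq0 //. Qed.
Lemma F3 (g p : F) : a3 * (2^-1 * (1 - g ^+ 2) * p) + b3 * (j / 2 * (1 + g ^+ 2) * p) =
        j / 2 * (1 + (c ^+ 2 + 1) * g ^+ 2) * p.
Proof. field: hJ; rewrite ?pnatr_eq0 //. Qed.
Lemma alg_form (g p : F) :
  [/\ a1 * (2^-1 * (1 - g ^+ 2) * p) + b1 * (j / 2 * (1 + g ^+ 2) * p) = c * g ^+ 2 * p,
      a2 * (2^-1 * (1 - g ^+ 2) * p) + b2 * (j / 2 * (1 + g ^+ 2) * p) =
        2^-1 * (1 + (c ^+ 2 - 1) * g ^+ 2) * p &
      a3 * (2^-1 * (1 - g ^+ 2) * p) + b3 * (j / 2 * (1 + g ^+ 2) * p) =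
        j / 2 * (1 + (c ^+ 2 + 1) * g ^+ 2) * p].
Proof. split; [exact: F1 | exact: F2 | exact: F3]. Qed.

Lemma alg_null (x y w : F) :
  (a1 * x + b1 * y) ^+ 2 + (a2 * x + b2 * y) ^+ 2 + (a3 * x + b3 * y) ^+ 2 + w ^+ 2
  = x ^+ 2 + y ^+ 2 + w ^+ 2.
Proof. field: hJ; rewrite ?pnatr_eq0 //. Qed.

Lemma alg_inj (x y : F) : a2 * x + b2 * y = 0 -> a3 * x + b3 * y = 0 -> x = 0 /\ y = 0.
Proof.
move=> e1 e2.
set X1 := a2 * x + b2 * y in e1; set X2 := a3 * x + b3 * y in e2.
have Ex : x = 2^-1 * ((2 * X1 - (c^+2 - 1) * (j * (j * X1 - X2))) - j * (j * X1 - X2)).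
  rewrite /X1 /X2; field: hJ; rewrite ?pnatr_eq0 //.
have Ey : y = j * 2^-1 * ((2 * X1 - (c^+2 - 1) * (j * (j * X1 - X2))) + j * (j * X1 - X2)).
  rewrite /X1 /X2; field: hJ; rewrite ?pnatr_eq0 //.
by rewrite Ex Ey e1 e2; split; ring.
Qed.

Lemma alg_wnull (g p : F) :
  (2^-1 * (1 - g ^+ 2) * p) ^+ 2 + (j / 2 * (1 + g ^+ 2) * p) ^+ 2 + (g * p) ^+ 2 = 0.
Proof. field: hJ; rewrite ?pnatr_eq0 //. Qed.

Lemma alg_deg (x y : F) : a1 * x + b1 * y + c * (a2 * x + b2 * y) + j * c * (a3 * x + b3 * y) = 0.
Proof. field: hJ; rewrite ?pnatr_eq0 //. Qed.
End Alg.

Section Met.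
Variable F : numClosedFieldType.
Local Notation j := ('i : F).
Local Notation a1 c := (- c). Local Notation b1 c := (- c * j).
Local Notation a2 c := (2^-1 - 2^-1 * (c ^+ 2 - 1)). Local Notation b2 c := (- (2^-1 * j) - 2^-1 * (c ^+ 2 - 1) * j).
Local Notation a3 c := (j / 2 - j / 2 * (c ^+ 2 + 1)). Local Notation b3 c := (- (j / 2 * j) - j / 2 * (c ^+ 2 + 1) * j).
Lemma alg_metric (c g p x y w : F) :
  x = 2^-1 * (1 - g ^+ 2) * p -> y = j / 2 * (1 + g ^+ 2) * p -> w = g * p ->
  1 + j * c * g != 0 -> 1 - j * c * g != 0 ->
  2^-1 * (`|a1 c * x + b1 c * y| ^+ 2 + `|a2 c * x + b2 c * y| ^+ 2 + `|a3 c * x + b3 c * y| ^+ 2 + `|w| ^+ 2)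
  = 4^-1 * (`|p| ^+ 2 * `|1 + c ^+ 2 * g ^+ 2| ^+ 2
               * (1 + `|g| ^+ 2 / `|1 + j * c * g| ^+ 2)
               * (1 + `|g| ^+ 2 / `|1 - j * c * g| ^+ 2)).
Proof.
move=> -> -> -> n1 n2.
have hJ : j ^+ 2 = -1 by rewrite sqrCi.
have h2 : 2^-1 * 2 = 1 :> F by rewrite mulVf // pnatr_eq0.
have h4 : 4^-1 = 2^-1 * 2^-1 :> F by rewrite -invfM -natrM.
rewrite (_ : 1 + c ^+ 2 * g ^+ 2 = (1 + j * c * g) * (1 - j * c * g)); last by ring: hJ.
set A := `|1 + j * c * g| ^+ 2; set B := `|1 - j * c * g| ^+ 2.
have An : A != 0 by rewrite sqrf_eq0 normr_eq0.
have Bn : B != 0 by rewrite sqrf_eq0 normr_eq0.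
rewrite (_ : `|(1 + 'i * c * g) * (1 - 'i * c * g)| ^+ 2 = A * B); last by rewrite normrM exprMn.
have -> : 4^-1 * (`|p| ^+ 2 * (A * B) * (1 + `|g| ^+ 2 / A) * (1 + `|g| ^+ 2 / B)) =
   4^-1 * (`|p| ^+ 2 * (A + `|g| ^+ 2) * (B + `|g| ^+ 2)).
  by field; rewrite Bn An.
rewrite /A /B !normCK.
have cM (u v : F) : (u * v)^* = u^* * v^* := rmorphM _ u v.
have cD (u v : F) : (u + v)^* = u^* + v^* := rmorphD _ u v.
have cB (u v : F) : (u - v)^* = u^* - v^* := rmorphB _ u v.
have cN (u : F) : (- u)^* = - u^* := rmorphN _ u.
have cX (u : F) n : (u ^+ n)^* = u^* ^+ n := rmorphXn _ n u.
have cV (u : F) : (u^-1)^* = (u^*)^-1 := fmorphV _ u.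
have c1 : (1 : F)^* = 1 := rmorph1 _.
have c2 : (2 : F)^* = 2 := conjC_nat _ 2.
rewrite !(cM, cV) ?c2 !(cD, cB, cN, cX, cM, c1, conjCi).
have c2i : (2^-1 : F)^* = 2^-1 by rewrite cV c2.
rewrite ?c2i.
rewrite h4; field: hJ; rewrite ?pnatr_eq0 //.
Qed.
End Met.

Theorem theorem5p1 (R : realType) (U P : set (C R)) (G Psi : C R -> C R)
  (phi1 phi2 phi3 Phi1 Phi2 Phi3 : C R -> C R) (c : C R) :
  (* Sigma is parametrized by a conformal coordinate on a simply connected domain *)
  simply_connected_domain U ->
  (* Weierstrass data: G meromorphic (poles P), Psi dzeta holomorphic *)
  meromorphic_on U P G ->
  holomorphic_on U Psi ->
  (* the holomorphic curve phi given by the Weierstrass representation *)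
  holomorphic_on U phi1 -> holomorphic_on U phi2 -> holomorphic_on U phi3 ->
  (forall z, (U `\` P) z ->
     [/\ phi1 z = 2^-1 * (1 - G z ^+ 2) * Psi z,
         phi2 z = 'i / 2 * (1 + G z ^+ 2) * Psi z &
         phi3 z = G z * Psi z]) ->
  (* X = (Re \int phi1, Re \int phi2, Re \int phi3) *)
  primitive_on U Phi1 phi1 -> primitive_on U Phi2 phi2 ->
  primitive_on U Phi3 phi3 ->
  (* X is an immersion *)
  (forall z, U z -> ~ (phi1 z = 0 /\ phi2 z = 0 /\ phi3 z = 0)) ->
  (* Sigma is non-planar *)
  nonplanar3 U Phi1 Phi2 Phi3 ->
  exists ph0 ph1 ph2 ph3 Ph0 Ph1 Ph2 Ph3 : C R -> C R,
    [/\ (* the curve phi-hat (holomorphically extended across the poles of G) *)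
        (forall z, (U `\` P) z ->
           [/\ ph0 z = c * G z ^+ 2 * Psi z,
               ph1 z = 2^-1 * (1 + (c ^+ 2 - 1) * G z ^+ 2) * Psi z,
               ph2 z = 'i / 2 * (1 + (c ^+ 2 + 1) * G z ^+ 2) * Psi z &
               ph3 z = G z * Psi z]),
        ([/\ holomorphic_on U ph0, holomorphic_on U ph1,
            holomorphic_on U ph2 & holomorphic_on U ph3] /\
         (* X^c = (Re \int ph0, ..., Re \int ph3) *)
         [/\ primitive_on U Ph0 ph0, primitive_on U Ph1 ph1,
            primitive_on U Ph2 ph2 & primitive_on U Ph3 ph3]),
        (* X^c is a conformal harmonic immersion: phi-hat is a null curve
           without zeros *)
        (forall z, U z ->
           ph0 z ^+ 2 + ph1 z ^+ 2 + ph2 z ^+ 2 + ph3 z ^+ 2 = 0 /\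
           ~ (ph0 z = 0 /\ ph1 z = 0 /\ ph2 z = 0 /\ ph3 z = 0)),
        (* the induced metric *)
        (forall z, (U `\` P) z ->
           1 + 'i * c * G z != 0 -> 1 - 'i * c * G z != 0 ->
           induced_metric4 ph0 ph1 ph2 ph3 z =
             4^-1 * (`|Psi z| ^+ 2 * `|1 + c ^+ 2 * G z ^+ 2| ^+ 2
               * (1 + `|G z| ^+ 2 / `|1 + 'i * c * G z| ^+ 2)
               * (1 + `|G z| ^+ 2 / `|1 - 'i * c * G z| ^+ 2)))
        & ((forall z, U z -> ph0 z + c * ph1 z + 'i * c * ph2 z = 0) /\
           degenerate4 U ph0 ph1 ph2 ph3)].
Proof.
move=> [oU _ _ _] [PU Pd Gh Gp] Psih h1 h2 h3 Hphi Pr1 Pr2 Pr3 Himm _.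
have hJ : ('i : C R) ^+ 2 = -1 by rewrite sqrCi.
have h2i : (2 : C R)^-1 * 2 = 1 by rewrite mulVf // pnatr_eq0.
exists (fun z => (- c) * phi1 z + (- c * 'i) * phi2 z),
  (fun z => (2^-1 - 2^-1 * (c ^+ 2 - 1)) * phi1 z + (- (2^-1 * 'i) - 2^-1 * (c ^+ 2 - 1) * 'i) * phi2 z),
  (fun z => ('i / 2 - 'i / 2 * (c ^+ 2 + 1)) * phi1 z + (- ('i / 2 * 'i) - 'i / 2 * (c ^+ 2 + 1) * 'i) * phi2 z),
  phi3,
  (fun z => (- c) * Phi1 z + (- c * 'i) * Phi2 z),
  (fun z => (2^-1 - 2^-1 * (c ^+ 2 - 1)) * Phi1 z + (- (2^-1 * 'i) - 2^-1 * (c ^+ 2 - 1) * 'i) * Phi2 z),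
  (fun z => ('i / 2 - 'i / 2 * (c ^+ 2 + 1)) * Phi1 z + (- ('i / 2 * 'i) - 'i / 2 * (c ^+ 2 + 1) * 'i) * Phi2 z),
  Phi3.
have ct k : holomorphic_on U k -> forall z, U z -> {for z, continuous k}.
  move=> hk z Uz; apply: differentiable_continuous; apply/derivable1_diffP; exact: hk.
split.
- move=> z /Hphi [-> -> ->]; split; [by apply: F1 | by apply: F2 | by apply: F3 | by []].
- split; split.
  + exact: hol_comb.
  + exact: hol_comb.
  + exact: hol_comb.
  + exact: h3.
  + exact: prim_comb.
  + exact: prim_comb.
  + exact: prim_comb.
  + exact: Pr3.
- move=> z Uz; split.
  + transitivity (phi1 z ^+ 2 + phi2 z ^+ 2 + phi3 z ^+ 2); first by apply: alg_null.
    rewrite !expr2; move: z Uz.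
    apply: (@zero_ext R U P (fun z => phi1 z * phi1 z + phi2 z * phi2 z + phi3 z * phi3 z) oU Pd).
      move=> w Uw.
      have c1 := ct _ h1 w Uw; have c2 := ct _ h2 w Uw; have c3 := ct _ h3 w Uw.
      exact: (cvgD (cvgD (cvgM c1 c1) (cvgM c2 c2)) (cvgM c3 c3)).
    move=> w /Hphi [-> -> ->]; rewrite -!expr2; by apply: alg_wnull.
  + case=> _ [e1 [e2 e3]].
    have [x0 y0] := alg_inj _ _ _ hJ _ _ e1 e2.
    exact: (Himm z Uz).
- move=> z /Hphi [E1 E2 E3] n1 n2; rewrite /induced_metric4 /=.
  have H := alg_metric _ _ _ _ _ _ _ E1 E2 E3 n1 n2. exact H.
- split.
  + move=> z _; by apply: alg_deg.
  + exists 1, c, ('i * c), 0; split; first by case; move/eqP; rewrite oner_eq0.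
    move=> z _; rewrite mul1r mul0r addr0; by apply: alg_deg.
Qed.
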